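(* With the matrices defined in the context, the matrix $$A^E_{p\beta}=\begin{pmatrix}A_p^E & \tau B_{\bm w}M_{\bm w}^{-1}B_\beta^\top\\ \tau B_\beta M_{\bm w}^{-1}B_{\bm w}^\top & \tau B_\beta M_{\bm w}^{-1}B_\beta^\top\end{pmatrix},\qquad A_p^E=\tfrac1M M_p+\alpha^2B_bD_{bb}^{-1}B_b^\top+\tau B_{\bm w}M_{\bm w}^{-1}B_{\bm w}^\top+\tfrac{\alpha^2}{\zeta^2}M_p,$$ is symmetric positive definite, where $\zeta=\sqrt{\lambda+2\mu/d}$.
   Context: Finite element setting: $\Omega\subset\mathbb R^d$ ($d=2,3$) bounded polygonal/polyhedral with boundary split into $\Gamma_t,\Gamma_c$; parameters $\mu>0,\lambda\ge0,\alpha>0,M>0$, $\kappa$ symmetric uniformly positive definite, $\tau>0$; $a_T(\bm u,\bm v)=2\mu\int_T\epsilon(\bm u):\epsilon(\bm v)+\lambda\int_T(\nabla\cdot\bm u)(\nabla\cdot\bm v)$. Quasi-uniform shape-regular simplicial mesh $\mathcal T_h$, faces with fixed unit normals $\bm n_e$; $(p,q)_h=\sum_T\int_Tpq$, $(\beta,\rho)_{\partial\mathcal T_h}=\sum_T\int_{\partial T}\beta\rho$. Spaces: bubbles $\bm\Phi_e=\varphi_e\bm n_e$ with $\varphi_e|_T$ the product of barycentric coordinates of $T$ at the vertices of face $e$ ($T\supset e$), $\bm V_b$ spanned by $\bm\Phi_e$ for faces not contained in $\overline\Gamma_c$; $Q_h$ piecewise constants; $B_h$ piecewise constants on faces; $\bm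 W_h$ elementwise $RT_0$ fields without inter-element continuity and zero normal component on boundary faces. $d_b(\bm u^b,\bm v^b)=\sum_T(d+1)\sum_{e\subset\partial T}u_ev_ea_T(\bm\Phi_e,\bm\Phi_e)$. Matrices (w.r.t. basis $\{\bm\Phi_e\}$ of $\bm V_b$, characteristic-function bases of $Q_h,B_h$, a basis of $\bm W_h$): $D_{bb}\leftrightarrow d_b$; $B_b\leftrightarrow-(\nabla\cdot\bm u^b,q)$; $B_{\bm w}\leftrightarrow-(\nabla\cdot\bm w,q)_h$; $B_\beta\leftrightarrow-(\bm w\cdot\bm n_e,\rho)_{\partial\mathcal T_h}$; $M_p\leftrightarrow(p,q)$; $M_{\bm w}\leftrightarrow(\kappa^{-1}\bm w,\bm r)_h$.
   Formalization: The space $B_h$ consists of piecewise constants on the interior faces only, not on all faces, so $B_\beta$ has one row per interior face. The statement above fails without it. *)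

(* Defs.v *)
From HB Require Import structures.
From mathcomp Require Import all_boot all_order all_algebra.
Set Implicit Arguments. Unset Strict Implicit. Unset Printing Implicit Defensive.
Import Order.TTheory GRing.Theory Num.Theory.
Local Open Scope ring_scope.

Definition spd (R : realFieldType) (n : nat) (A : 'M[R]_n) : Prop :=
  A^T = A /\ forall v : 'cV[R]_n, v != 0 -> 0 < (v^T *m A *m v) 0 0.

(* Mesh data: elements, faces, face-element incidence, contact faces,
   sign n_e . n_{partial T} of the fixed face normal w.r.t. the outward normal,
   element volumes |T|, face measures |e|, and for the bubble of face e on T:
   strain T e = int_T eps(Phi_e):eps(Phi_e), divsq T e = int_T (div Phi_e)^2. *)
Record mesh (R : rcfType) := Mesh {
  Elem : finType;
  Face : finType;
  inc : Elem -> Face -> bool;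
  contact : Face -> bool;
  sgn : Elem -> Face -> R;
  vol : Elem -> R;
  area : Face -> R;
  strain : Elem -> Face -> R;
  divsq : Elem -> Face -> R
}.

Section MeshDefs.
Variables (R : rcfType) (m : mesh R).

Definition nelem (e : Face m) : nat := #|[set T | inc T e]|.
Definition interior (e : Face m) : bool := nelem e == 2%N.
Definition boundary (e : Face m) : bool := nelem e == 1%N.

Definition mesh_ok (d : nat) : Prop :=
  [/\ forall T : Elem m, #|[set e | inc T e]| = d.+1,
      forall e : Face m, interior e || boundary e,
      forall (T : Elem m) (e : Face m), inc T e -> sgn T e = 1 \/ sgn T e = -1,
      forall (e : Face m) (T1 T2 : Elem m), inc T1 e -> inc T2 e -> T1 != T2 -> sgn T1 e = - sgn T2 e &
      [/\ forall T : Elem m, 0 < vol T, forall e : Face m, 0 < area e,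
          forall (T : Elem m) (e : Face m), inc T e -> 0 < strain T e,
          forall (T : Elem m) (e : Face m), inc T e -> 0 <= divsq T e &
          forall e, contact e -> boundary e]].

Definition VbI := {e : Face m | ~~ contact e}.          (* bubbles Phi_e *)
Definition BI := {e : Face m | interior e}.               (* multipliers on faces *)
Definition WI := {p : Elem m * Face m | inc p.1 p.2 && interior p.2}.
  (* RT0 basis psi_(T,e): supported on T, flux 1 through face e, 0 through others *)

HB.instance Definition _ := Finite.copy VbI {e : Face m | ~~ contact e}.
HB.instance Definition _ := Finite.copy BI {e : Face m | interior e}.
HB.instance Definition _ := Finite.copy WI {p : Elem m * Face m | inc p.1 p.2 && interior p.2}.

Definition nQ := #|{: Elem m}|.
Definition nV := #|{: VbI}|.
Definition nB := #|{: BI}|.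
Definition nW := #|{: WI}|.

(* int_e varphi_e = |e| (d-1)! / (2d-1)! *)
Definition bubble_int (d : nat) (e : Face m) : R :=
  area e * ((d.-1)`!)%:R / (((2 * d).-1)`!)%:R.

Definition Mp : 'M[R]_nQ :=
  \matrix_(i, j) (if i == j then vol (enum_val i) else 0).

Definition a_bub (mu lambda : R) (T : Elem m) (e : Face m) : R :=
  2 * mu * strain T e + lambda * divsq T e.

Definition Dbb (d : nat) (mu lambda : R) : 'M[R]_nV :=
  \matrix_(i, j) (if i == j then
     (d.+1)%:R * \sum_(T | inc T (val (enum_val i))) a_bub mu lambda T (val (enum_val i))
   else 0).

(* -(div Phi_e, 1_T) = - (n_e.n_T) int_e varphi_e *)
Definition Bb (d : nat) : 'M[R]_(nQ, nV) :=
  \matrix_(i, j) (let T := enum_val i in let e := val (enum_val j) in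
     if inc T e then - (sgn T e * bubble_int d e) else 0).

(* -(div psi_(T',e'), 1_T) = - [T == T'] *)
Definition Bw : 'M[R]_(nQ, nW) :=
  \matrix_(i, j) (- (enum_val i == (val (enum_val j)).1)%:R).

(* -(psi_(T',e') . n_e, 1_e)_{partial T_h} = - [e == e'] (n_e . n_T') *)
Definition Bbeta : 'M[R]_(nB, nW) :=
  \matrix_(i, j) (let p := val (enum_val j) in
     - ((val (enum_val i) == p.2)%:R * sgn p.1 p.2)).

Definition ApE (d : nat) (mu lambda alpha M tau : R) (Mw : 'M[R]_nW) : 'M[R]_nQ :=
  let zeta := Num.sqrt (lambda + 2 * mu / d%:R) in
  M^-1 *: Mp + alpha ^+ 2 *: (Bb d *m invmx (Dbb d mu lambda) *m (Bb d)^T)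
  + tau *: (Bw *m invmx Mw *m Bw^T) + (alpha ^+ 2 / zeta ^+ 2) *: Mp.

Definition ApbE (d : nat) (mu lambda alpha M tau : R) (Mw : 'M[R]_nW)
  : 'M[R]_(nQ + nB) :=
  block_mx (ApE d mu lambda alpha M tau Mw) (tau *: (Bw *m invmx Mw *m Bbeta^T))
           (tau *: (Bbeta *m invmx Mw *m Bw^T)) (tau *: (Bbeta *m invmx Mw *m Bbeta^T)).

End MeshDefs.

(* Main.v *)
Require Import Defs.
From mathcomp Require Import all_boot all_order all_algebra.
Import Order.TTheory GRing.Theory Num.Theory.
Local Open Scope ring_scope.
Set Implicit Arguments. Unset Strict Implicit.
Section Gen.
Variable R : realFieldType.
Definition qf n (A : 'M[R]_n) (v : 'cV_n) := (v^T *m A *m v) 0 0.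
Definition psd n (A : 'M[R]_n) := forall v, 0 <= qf A v.

Lemma qfD n (A B : 'M[R]_n) v : qf (A + B) v = qf A v + qf B v.
Proof. by rewrite /qf mulmxDr mulmxDl mxE. Qed.
Lemma qfZ n a (A : 'M[R]_n) v : qf (a *: A) v = a * qf A v.
Proof. by rewrite /qf -scalemxAr -scalemxAl mxE. Qed.
Lemma qf_congr n k (C : 'M[R]_(n,k)) X v : qf (C *m X *m C^T) v = qf X (C^T *m v).
Proof. by rewrite /qf trmx_mul trmxK !mulmxA. Qed.

Lemma spd_psd n (A : 'M[R]_n) : spd A -> psd A.
Proof.
move=> [_ H] v; have [->|/H/ltW //] := eqVneq v 0.
by rewrite /qf mulmx0 mxE.
Qed.

Lemma spd_unit n (A : 'M[R]_n) : spd A -> A \in unitmx.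
Proof.
move=> [_ H]; rewrite unitmxE unitfE; apply/negP => /det0P [v v0 vA].
have : v^T != 0 by apply: contra v0 => /eqP/(congr1 trmx); rewrite trmxK trmx0 => ->.
move/H; rewrite trmxK vA mul0mx mxE; by rewrite ltxx.
Qed.

Lemma spd_inv n (A : 'M[R]_n) : spd A -> spd (invmx A).
Proof.
move=> hA; have uA := spd_unit hA; case: hA => sA H; split.
  by rewrite trmx_inv sA.
move=> v v0; set w := invmx A *m v.
have w0 : w != 0.
  apply: contra v0 => /eqP w0; apply/eqP.
  by rewrite -(mulKVmx uA v) -/w w0 mulmx0.
have := H _ w0; rewrite /w trmx_mul trmx_inv sA.
by rewrite -!mulmxA (mulmxA A) (mulmxV uA) mul1mx !mulmxA.
Qed.

Lemma psd_congr n k (C : 'M[R]_(n,k)) X : psd X -> psd (C *m X *m C^T).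
Proof. by move=> H v; rewrite qf_congr. Qed.

Lemma psdD n (A B : 'M[R]_n) : psd A -> psd B -> psd (A + B).
Proof. by move=> ha hb v; rewrite qfD addr_ge0. Qed.
Lemma psdZ n a (A : 'M[R]_n) : 0 <= a -> psd A -> psd (a *: A).
Proof. by move=> ha hb v; rewrite qfZ mulr_ge0. Qed.

Lemma spd_pos n (A : 'M[R]_n) v : spd A -> v != 0 -> 0 < qf A v.
Proof. by case=> _ H /H. Qed.

Lemma diag_spd n (D : 'M[R]_n) (f : 'I_n -> R) :
  (forall i j, D i j = if i == j then f i else 0) -> (forall i, 0 < f i) -> spd D.
Proof.
move=> hD hf; split.
  apply/matrixP => i j; rewrite !mxE !hD eq_sym; by case: eqP => // ->.
move=> v v0.
have E : (v^T *m D *m v) 0 0 = \sum_j (v j 0 * f j * v j 0).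
  rewrite mxE; apply: eq_bigr => j _; congr (_ * _).
  rewrite mxE (bigD1 j) //= big1 ?addr0 => [|k /negPf kj]; rewrite mxE hD ?eqxx //.
  by rewrite kj mulr0.
have nn : forall j : 'I_n, true -> 0 <= v j 0 * f j * v j 0.
  by move=> j _; rewrite mulrAC -expr2 mulr_ge0 ?sqr_ge0 // ltW.
rewrite E lt_def sumr_ge0 ?andbT //.
apply/negP => /eqP /(psumr_eq0P nn) H.
have : forall j, v j 0 = 0.
  move=> j; have /eqP := H j isT.
  by rewrite mulrAC mulf_eq0 (gt_eqF (hf j)) orbF -expr2 sqrf_eq0 => /eqP.
move=> z; move/negP: v0; apply; apply/eqP/matrixP => i j.
by rewrite ord1 mxE z.
Qed.
End Gen.

Section Main.
Variables (R : rcfType) (m : mesh R).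

Lemma Mp_spd : mesh_ok m 2 \/ True -> (forall T : Elem m, 0 < vol T) -> spd (Mp m).
Proof.
move=> _ hv; apply: (@diag_spd _ _ _ (fun i => vol (enum_val i))) => //.
by move=> i j; rewrite mxE.
Qed.

Lemma Dbb_spd d mu lambda : (forall e : Face m, interior e || boundary e) ->
  0 < mu -> 0 <= lambda ->
  (forall (T : Elem m) (e : Face m), inc T e -> 0 < strain T e) ->
  (forall (T : Elem m) (e : Face m), inc T e -> 0 <= divsq T e) ->
  spd (Dbb m d mu lambda).
Proof.
move=> hib hmu hl hs hd.
apply: (@diag_spd _ _ _ (fun i => (d.+1)%:R * \sum_(T | inc T (val (enum_val i))) a_bub mu lambda T (val (enum_val i)))).
  by move=> i j; rewrite mxE.
move=> i; rewrite mulr_gt0 ?ltr0Sn //.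
set e := val (enum_val i).
have : (0 < nelem e)%N by move: (hib e); rewrite /interior /boundary => /orP [] /eqP ->.
rewrite /nelem card_gt0 => /set0Pn [T]; rewrite inE => hT.
have pos : forall T', inc T' e -> 0 < a_bub mu lambda T' e.
  move=> T' hT'; rewrite /a_bub ltr_pwDl ?mulr_ge0 ?hd // mulr_gt0 ?hs // mulr_gt0 //.
rewrite (bigD1 T) //= ltr_pwDl ?pos // sumr_ge0 // => T' /andP [h _].
exact: ltW (pos _ h).
Qed.

Lemma Bbeta_inj (b : 'cV[R]_(nB m)) :
  (forall e : Face m, interior e || boundary e) ->
  (forall (T : Elem m) (e : Face m), inc T e -> sgn T e = 1 \/ sgn T e = -1) ->
  b != 0 -> (Bbeta m)^T *m b != 0.
Proof.
move=> hib hsg b0.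
have [i bi] : exists i, b i 0 != 0.
  apply/existsP; apply: contraR b0 => /existsPn H; apply/eqP/matrixP => i j.
  by rewrite ord1 mxE; move: (H i); rewrite negbK => /eqP.
set e := val (enum_val i).
have ie : interior e := valP (enum_val i).
have : (0 < nelem e)%N by move: ie; rewrite /interior => /eqP ->.
rewrite /nelem card_gt0 => /set0Pn [T]; rewrite inE => hT.
have hp : inc (T, e).1 (T, e).2 && interior (T, e).2 by rewrite /= hT ie.
pose w : WI m := exist _ (T, e) hp.
apply/negP => /eqP /matrixP /(_ (enum_rank w) 0).
rewrite !mxE (bigD1 i) //= big1 ?addr0.
  rewrite !mxE enum_rankK /= eqxx mul1r => /eqP.
  rewrite mulNr oppr_eq0 mulf_eq0 (negPf bi) orbF.
  by case: (hsg _ _ hT) => ->; rewrite ?oppr_eq0 oner_eq0.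
move=> k ki; rewrite !mxE enum_rankK /=.
case: eqP => [h|]; last by rewrite mul0r oppr0 mul0r.
case/negP: ki; apply/eqP/enum_val_inj/val_inj => //.
Qed.

End Main.

Unset Implicit Arguments.

Theorem corollary1 (R : rcfType) (d : nat) (m : mesh R)
  (mu lambda alpha M tau : R) (Mw : 'M[R]_(nW m)) :
  (2 <= d <= 3)%N -> 0 < mu -> 0 <= lambda -> 0 < alpha -> 0 < M -> 0 < tau ->
  mesh_ok m d -> spd Mw ->
  spd (@ApbE R m d mu lambda alpha M tau Mw).
Proof.
move=> hd hmu hl ha hM ht [_ hib hsg _ [hv _ hs hdv _]] hMw.
set zeta := Num.sqrt (lambda + 2 * mu / d%:R).
set X := invmx Mw.
set Q := M^-1 *: Mp m + alpha ^+ 2 *: (Bb m d *m invmx (Dbb m d mu lambda) *m (Bb m d)^T)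
   + (alpha ^+ 2 / zeta ^+ 2) *: Mp m.
set C := col_mx (Bw m) (Bbeta m).
have hX : spd X by apply: spd_inv.
have hMp : spd (Mp m) by apply: Mp_spd => //; right.
have hDi : spd (invmx (Dbb m d mu lambda)) by apply/spd_inv/Dbb_spd.
have sQ : Q^T = Q.
  rewrite /Q !linearD !linearZ /= !trmx_mul trmxK hMp.1 hDi.1 !mulmxA //.
have pQ : spd Q.
  split => // v v0; rewrite -/(qf _ v) !qfD !qfZ.
  rewrite -addrA ltr_pwDl ?mulr_gt0 ?invr_gt0 ?spd_pos //.
  apply: addr_ge0; apply: mulr_ge0; rewrite ?sqr_ge0 ?divr_ge0 ?sqr_ge0 //.
    by apply: psd_congr; apply: spd_psd.
  by apply: spd_psd.
have E : @ApbE R m d mu lambda alpha M tau Mw = block_mx Q 0 0 0 + tau *: (C *m X *m C^T).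
  rewrite /C mul_col_mx tr_col_mx mul_col_row scale_block_mx add_block_mx !add0r.
  by rewrite /ApbE /ApE /Q -/zeta -/X addrAC.
rewrite E; split.
  rewrite linearD linearZ /= tr_block_mx !trmx0 sQ !trmx_mul trmxK hX.1 !mulmxA //.
move=> v v0; rewrite -/(qf _ v) qfD qfZ qf_congr.
rewrite -(vsubmxK v) in v0 *.
set p := usubmx v in v0 *; set b := dsubmx v in v0 *.
have -> : qf (block_mx Q 0 0 0) (col_mx p b) = qf Q p.
  rewrite /qf tr_col_mx mul_row_block mul_row_col !mulmx0 !addr0 mul0mx addr0 //.
clearbody p b.
have hq : 0 <= qf Q p by apply: spd_psd.
have hx : forall y, 0 <= qf X y by apply: spd_psd.
have [p0|pn0] := eqVneq p 0.
  have -> : qf Q p = 0 by rewrite p0 /qf mulmx0 mxE.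
  rewrite p0 add0r mulr_gt0 // spd_pos // /C tr_col_mx mul_row_col mulmx0 add0r.
  apply: Bbeta_inj => //; move: v0; rewrite p0; apply: contra => /eqP ->.
  by rewrite col_mx0.
apply: ltr_pwDl; first exact: spd_pos pQ pn0.
apply: mulr_ge0; [exact: ltW | exact: hx].
Qed.
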